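(* For any $t,x$, one has $(\mathbb L_y-\mathbb L_z)\dfrac{1}{\sqrt{f_t(x,y,z)}}=0$ (for any local branch of the square root, where $f_t(x,y,z)\neq0$).
   Context: Here $t,x,y,z$ are complex variables, $f_t(x,y,z)=(t+xy-zx-zy)^2-4(z-t)(z-1)xy$, and $\mathbb L_y=\partial_y\,y(y-1)(y-t)\,\partial_y+y$ is the Lamé operator in the variable $y$ (and similarly $\mathbb L_z$ in $z$). *)

(* Defs.v *)
From Stdlib Require Import Reals ClassicalEpsilon.
From Coquelicot Require Import Coquelicot.
Open Scope C_scope.

(* Complex derivative of f : C -> C at z (holomorphic derivative, Coquelicot's
   is_derive over the absolute ring C); if f is not complex-differentiable at z
   the value is an arbitrary complex number. *)
Definition Cderiv (f : C -> C) (z : C) : C :=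
  epsilon (inhabits (RtoC 0)) (fun l : C => is_derive f z l).

Definition ft (t x y z : C) : C :=
  (t + x * y - z * x - z * y) * (t + x * y - z * x - z * y)
  - RtoC 4 * (z - t) * (z - RtoC 1) * x * y.

Definition Lame (t : C) (h : C -> C) (w : C) : C :=
  Cderiv (fun u => u * (u - RtoC 1) * (u - t) * Cderiv h u) w + w * h w.

(* Main.v *)
Require Import Defs.
From Stdlib Require Import Reals Lra ClassicalEpsilon.
From Coquelicot Require Import Coquelicot.
Open Scope C_scope.

Lemma C2 : RtoC 2 = RtoC 1 + RtoC 1. Proof. rewrite <- RtoC_plus. f_equal; try ring. Qed.
Lemma C3 : RtoC 3 = RtoC 1 + RtoC 1 + RtoC 1. Proof. rewrite <- !RtoC_plus. f_equal; try ring. Qed.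
Lemma C4 : RtoC 4 = RtoC 1 + RtoC 1 + RtoC 1 + RtoC 1. Proof. rewrite <- !RtoC_plus. f_equal; try ring. Qed.

Lemma Cderiv_unique f x l : is_derive f x l -> Cderiv f x = l.
Proof.
  intros H. unfold Cderiv.
  pose proof (epsilon_spec (inhabits (RtoC 0)) (fun l : C => is_derive f x l) (ex_intro _ l H)) as H2.
  apply is_C_derive_unique in H. apply is_C_derive_unique in H2. congruence.
Qed.

Lemma toA f x l : @is_derive C_AbsRing C_NormedModule f x l -> @is_derive C_AbsRing (AbsRing_NormedModule C_AbsRing) f x l.
Proof. intros [_ H]. split. apply is_linear_scal_l. intros y Hy e. exact (H y Hy e). Qed.
Lemma ofA f x l : @is_derive C_AbsRing (AbsRing_NormedModule C_AbsRing) f x l -> @is_derive C_AbsRing C_NormedModule f x l.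
Proof. intros [_ H]. split. apply is_linear_scal_l. intros y Hy e. exact (H y Hy e). Qed.

Lemma D_eq (f : C -> C) (x l l' : C) : is_derive f x l -> l = l' -> is_derive f x l'.
Proof. intros H ->. exact H. Qed.

Lemma D_mult (f g : C -> C) x df dg : is_derive f x df -> is_derive g x dg ->
  is_derive (fun u => f u * g u) x (df * g x + f x * dg).
Proof. intros. pose proof (is_derive_mult (K:=C_AbsRing) f g x df dg) as K. apply ofA. exact (K (toA _ _ _ H) (toA _ _ _ H0) Cmult_comm). Qed.
Lemma D_plus (f g : C -> C) x df dg : is_derive f x df -> is_derive g x dg ->
  is_derive (fun u => f u + g u) x (df + dg).
Proof. intros. pose proof (is_derive_plus (K:=C_AbsRing) f g x df dg) as K. exact (K H H0). Qed.
Lemma D_minus (f g : C -> C) x df dg : is_derive f x df -> is_derive g x dg ->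
  is_derive (fun u => f u - g u) x (df - dg).
Proof. intros. pose proof (is_derive_minus (K:=C_AbsRing) f g x df dg) as K. exact (K H H0). Qed.
Lemma D_opp (f : C -> C) x df : is_derive f x df ->
  is_derive (fun u => - f u) x (- df).
Proof. intros. pose proof (is_derive_opp (K:=C_AbsRing) f x df) as K. exact (K H). Qed.
Lemma D_id x : is_derive (fun u : C => u) x (RtoC 1).
Proof. apply ofA. exact (is_derive_id (K:=C_AbsRing) x). Qed.
Lemma D_const (a : C) x : is_derive (fun _ : C => a) x (RtoC 0).
Proof. exact (is_derive_const (K:=C_AbsRing) (V:=C_NormedModule) a x). Qed.

Lemma D_Cinv (z : C) : z <> 0 -> is_derive (fun u => / u) z (- / (z * z)).
Proof.
  intros Hz. split. apply is_linear_scal_l.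
  intros x' Hx'. apply (is_filter_lim_locally_unique (K:=C_AbsRing) (V:=AbsRing_NormedModule C_AbsRing)) in Hx'. subst x'.
  intros e. apply (locally_le_locally_norm (K:=C_AbsRing) (V:=AbsRing_NormedModule C_AbsRing)).
  assert (Hc : 0 < Cmod z) by (apply Cmod_gt_0; auto).
  assert (Hd : 0 < Rmin (Cmod z / 2) (e * (Cmod z * Cmod z * Cmod z) / 2)).
  { apply Rmin_case; [lra|]. pose proof (cond_pos e).
    assert (0 < Cmod z * Cmod z * Cmod z) by (repeat apply Rmult_lt_0_compat; auto). nra. }
  exists (mkposreal _ Hd). intros y Hy. unfold ball_norm in Hy. simpl in Hy.
  change (Cmod (/y - /z - (y - z) * (- / (z*z))) <= e * Cmod (y - z)).
  change (Cmod (y - z) < Rmin (Cmod z / 2) (e * (Cmod z * Cmod z * Cmod z) / 2)) in Hy.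
  assert (Hy1 : Cmod (y - z) < Cmod z / 2) by (eapply Rlt_le_trans; [exact Hy | apply Rmin_l]).
  assert (Hy2 : Cmod (y - z) < e * (Cmod z * Cmod z * Cmod z) / 2) by (eapply Rlt_le_trans; [exact Hy | apply Rmin_r]).
  assert (Hb : Cmod z <= Cmod y + Cmod (y - z)).
  { replace z with (y + - (y - z)) at 1 by ring. rewrite <- (Cmod_opp (y - z)). apply Cmod_triangle. }
  assert (Hy0 : (y:C) <> RtoC 0). { intros H0. assert (Cmod y = 0)%R by (rewrite H0; apply Cmod_0). lra. }
  replace (/y - /z - (y - z) * (- / (z*z))) with ((y - z) * (y - z) * / (y * (z * z))) by (field; auto).
  rewrite Cmod_mult, Cmod_mult, Cmod_inv, !Cmod_mult.
  2:{ repeat apply Cmult_neq_0; auto. }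
  set (a := Cmod (y - z)) in *. set (b := Cmod y) in *. set (c := Cmod z) in *.
  pose proof (Cmod_ge_0 (y - z)) as Ha. fold a in Ha. pose proof (cond_pos e) as He.
  assert (Hbc : 0 < b * (c * c)) by (apply Rmult_lt_0_compat; [lra | nra]).
  apply (Rmult_le_reg_r (b * (c * c))); auto.
  rewrite Rmult_assoc, Rinv_l by lra. rewrite Rmult_1_r.
  assert (a * a <= a * (e * (c * c * c) / 2)) by (apply Rmult_le_compat_l; lra).
  assert (e * (c * c * c) / 2 <= e * (b * (c * c))).
  { assert (c / 2 <= b) by lra. assert (c * c * c / 2 <= b * (c * c)) by nra. nra. }
  nra.
Qed.

Lemma D_inv (f : C -> C) x df : is_derive f x df -> f x <> 0 ->
  is_derive (fun u => / f u) x (- df / (f x * f x)).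
Proof.
  intros H Hx. pose proof (is_derive_comp (K:=C_AbsRing) (V:=C_NormedModule) (fun u => / u) f x _ _ (D_Cinv _ Hx) (toA _ _ _ H)) as K.
  eapply D_eq. exact K. change (df * (- / (f x * f x)) = - df / (f x * f x)). unfold Cdiv. ring.
Qed.

Lemma C2nz : RtoC 2 <> RtoC 0. Proof. intros H. injection H. lra. Qed.
Lemma C4nz : RtoC 4 <> RtoC 0. Proof. intros H. injection H. lra. Qed.

Lemma ball_loc (y0 u : C) (eps : R) : Cmod (u - y0) < eps ->
  @locally (AbsRing_UniformSpace C_AbsRing) u (fun v => Cmod (v - y0) < eps).
Proof.
  intros H. apply (locally_le_locally_norm (K:=C_AbsRing) (V:=AbsRing_NormedModule C_AbsRing)).
  assert (H0 : 0 < eps - Cmod (u - y0)) by lra. exists (mkposreal _ H0).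
  intros v Hv. unfold ball_norm in Hv. simpl in Hv.
  change (Cmod (v - u) < eps - Cmod (u - y0)) in Hv.
  replace (v - y0) with ((v - u) + (u - y0)) by ring.
  pose proof (Cmod_triangle (v - u) (u - y0)). lra.
Qed.

Lemma cont_nz (G : C -> C) (y0 : C) : ex_derive G y0 -> G y0 <> 0 ->
  @locally (AbsRing_UniformSpace C_AbsRing) y0 (fun u => G u <> 0).
Proof.
  intros Hd Hn. pose proof (ex_derive_continuous (K:=C_AbsRing) (V:=C_NormedModule) G y0 Hd) as Hc.
  apply (Hc (fun v : C => v <> 0)). apply (locally_le_locally_norm (K:=C_AbsRing) (V:=C_NormedModule)).
  assert (H0 : 0 < Cmod (G y0)) by (apply Cmod_gt_0; auto).
  exists (mkposreal _ H0). intros v Hv. unfold ball_norm in Hv. simpl in Hv.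
  change (Cmod (v - G y0) < Cmod (G y0)) in Hv.
  intros ->. replace (0 - G y0) with (- G y0) in Hv by ring. rewrite Cmod_opp in Hv. lra.
Qed.

Lemma Ckey (a g : C) : g <> 0 -> a = (a * g + g * a) * / (RtoC 2 * g).
Proof. intros. field. auto. Qed.

Ltac dstep := match goal with
  | |- is_derive (fun _ => ?c) _ _ => apply (D_const c)
  | |- is_derive (fun u => u) _ _ => apply D_id
  | |- is_derive (fun u => @?A u * @?B u) _ _ => eapply (D_mult A B)
  | |- is_derive (fun u => @?A u + @?B u) _ _ => eapply (D_plus A B)
  | |- is_derive (fun u => @?A u - @?B u) _ _ => eapply (D_minus A B)
  | |- is_derive (fun u => - @?A u) _ _ => eapply (D_opp A)
  | |- is_derive (fun u => / @?A u) _ _ => eapply (D_inv A)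
  | |- is_derive (fun u => ?G u) _ _ => eassumption
  end.
Ltac dtac := repeat dstep.

Lemma side t (G F F1 : C -> C) (F2 y0 : C) (eps : posreal) :
  (forall u, is_derive F u (F1 u)) -> is_derive F1 y0 F2 ->
  (forall u, Cmod (u - y0) < eps -> G u * G u = F u /\ ex_derive G u) ->
  F y0 <> 0 ->
  Lame t (fun u => / G u) y0 * (G y0 * G y0 * G y0 * G y0 * G y0) * RtoC 4 =
  - RtoC 2 * (((y0 - RtoC 1) * (y0 - t) + y0 * (y0 - t) + y0 * (y0 - RtoC 1)) * F1 y0
              + y0 * (y0 - RtoC 1) * (y0 - t) * F2) * F y0
  + RtoC 3 * (y0 * (y0 - RtoC 1) * (y0 - t)) * F1 y0 * F1 y0 + RtoC 4 * y0 * F y0 * F y0.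
Proof.
  intros HF HF1 HG HF0.
  assert (HGd : forall u, Cmod (u - y0) < eps -> G u <> 0 ->
            is_derive G u (F1 u * / (RtoC 2 * G u))).
  { intros u Hu Gu. destruct (HG u Hu) as [Hsq Hex].
    pose proof (C_derive_correct G u (RtoC 0) Hex) as Hd.
    assert (Hd2 : is_derive (fun v => G v * G v) u (C_derive G u * G u + G u * C_derive G u))
      by (apply D_mult; auto).
    assert (Hd3 : is_derive F u (C_derive G u * G u + G u * C_derive G u)).
    { eapply is_derive_ext_loc; [| exact Hd2].
      eapply filter_imp; [| apply (ball_loc y0 u eps Hu)]. intros v Hv. apply (HG v Hv). }
    pose proof (Cderiv_unique _ _ _ Hd3) as E1. pose proof (Cderiv_unique _ _ _ (HF u)) as E2.
    rewrite E1 in E2. eapply D_eq; [exact Hd|]. rewrite <- E2. apply Ckey; auto. }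
  assert (Hy0 : Cmod (y0 - y0) < eps).
  { replace (y0 - y0) with (RtoC 0) by ring. rewrite Cmod_0. apply cond_pos. }
  destruct (HG y0 Hy0) as [Hsq0 Hex0].
  assert (G0 : G y0 <> 0). { intros H. apply HF0. rewrite <- Hsq0, H. ring. }
  assert (HN : @locally (AbsRing_UniformSpace C_AbsRing) y0 (fun u => Cmod (u - y0) < eps /\ G u <> 0)).
  { apply filter_and. apply ball_loc; auto. apply cont_nz; auto. }
  assert (Hh : forall u, Cmod (u - y0) < eps /\ G u <> 0 ->
     Cderiv (fun v => / G v) u = - (F1 u * / (RtoC 2 * G u)) / (G u * G u)).
  { intros u [Hu Gu]. apply Cderiv_unique. apply D_inv; auto. }
  pose proof (HGd y0 Hy0 G0) as HGd0.
  unfold Lame.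
  erewrite (Cderiv_unique (fun u : C => u * (u - RtoC 1) * (u - t) * Cderiv (fun v => / G v) u) y0).
  2:{ eapply is_derive_ext_loc with
        (f := fun u : C => u * (u - RtoC 1) * (u - t) * (- (F1 u * / (RtoC 2 * G u)) * / (G u * G u))).
      { eapply filter_imp; [| exact HN]. intros u Hu. simpl. rewrite Hh; auto. }
      dtac.
      all: apply Cmult_neq_0; auto; exact C2nz. }
  rewrite <- Hsq0. field. auto.
Qed.

Theorem proposition5p14 (t x y0 z0 : C) (g : C -> C -> C) (eps : posreal) :
  ft t x y0 z0 <> RtoC 0 ->
  (forall y z : C, Cmod (y - y0) < eps -> Cmod (z - z0) < eps ->
     g y z * g y z = ft t x y z /\
     ex_derive (fun w : C => g w z) y /\
     ex_derive (fun w : C => g y w) z) ->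
  Lame t (fun y : C => / g y z0) y0 - Lame t (fun z : C => / g y0 z) z0 = RtoC 0.
Proof.
  intros Hf Hg.
  assert (Hy0 : Cmod (y0 - y0) < eps).
  { replace (y0 - y0) with (RtoC 0) by ring. rewrite Cmod_0. apply cond_pos. }
  assert (Hz0 : Cmod (z0 - z0) < eps).
  { replace (z0 - z0) with (RtoC 0) by ring. rewrite Cmod_0. apply cond_pos. }
  pose proof (side t (fun w => g w z0) (fun w => ft t x w z0)
    (fun w => RtoC 2 * (t + x * w - z0 * x - z0 * w) * (x - z0) - RtoC 4 * (z0 - t) * (z0 - RtoC 1) * x)
    (RtoC 2 * (x - z0) * (x - z0)) y0 eps) as E1.
  pose proof (side t (fun w => g y0 w) (fun w => ft t x y0 w)
    (fun w => RtoC 2 * (t + x * y0 - w * x - w * y0) * (- (x + y0)) - RtoC 4 * ((w - RtoC 1) + (w - t)) * x * y0)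
    (RtoC 2 * (x + y0) * (x + y0) - RtoC 4 * RtoC 2 * x * y0) z0 eps) as E2.
  simpl in E1, E2.
  assert (H1 : forall u, is_derive (fun w => ft t x w z0) u
     (RtoC 2 * (t + x * u - z0 * x - z0 * u) * (x - z0) - RtoC 4 * (z0 - t) * (z0 - RtoC 1) * x)).
  { intros u. eapply D_eq. unfold ft. dtac. rewrite ?C2, ?C4. ring. }
  assert (H2 : is_derive (fun w => RtoC 2 * (t + x * w - z0 * x - z0 * w) * (x - z0) - RtoC 4 * (z0 - t) * (z0 - RtoC 1) * x) y0
     (RtoC 2 * (x - z0) * (x - z0))).
  { eapply D_eq. dtac. rewrite ?C2, ?C4. ring. }
  assert (H3 : forall u, is_derive (fun w => ft t x y0 w) u
     (RtoC 2 * (t + x * y0 - u * x - u * y0) * (- (x + y0)) - RtoC 4 * ((u - RtoC 1) + (u - t)) * x * y0)).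
  { intros u. eapply D_eq. unfold ft. dtac. rewrite ?C2, ?C4. ring. }
  assert (H4 : is_derive (fun w => RtoC 2 * (t + x * y0 - w * x - w * y0) * (- (x + y0)) - RtoC 4 * ((w - RtoC 1) + (w - t)) * x * y0) z0
     (RtoC 2 * (x + y0) * (x + y0) - RtoC 4 * RtoC 2 * x * y0)).
  { eapply D_eq. dtac. rewrite ?C2, ?C4. ring. }
  specialize (E1 H1 H2). specialize (E2 H3 H4).
  assert (HG1 : forall u, Cmod (u - y0) < eps -> g u z0 * g u z0 = ft t x u z0 /\ ex_derive (fun w => g w z0) u).
  { intros u Hu. destruct (Hg u z0 Hu Hz0) as [A [B C]]. split; auto. }
  assert (HG2 : forall u, Cmod (u - z0) < eps -> g y0 u * g y0 u = ft t x y0 u /\ ex_derive (fun w => g y0 w) u).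
  { intros u Hu. destruct (Hg y0 u Hy0 Hu) as [A [B C]]. split; auto. }
  specialize (E1 HG1 Hf). specialize (E2 HG2 Hf).
  assert (G0 : g y0 z0 <> 0).
  { intros H. apply Hf. destruct (Hg y0 z0 Hy0 Hz0) as [A _]. rewrite <- A, H. ring. }
  assert (K : g y0 z0 * g y0 z0 * g y0 z0 * g y0 z0 * g y0 z0 * RtoC 4 <> 0).
  { repeat apply Cmult_neq_0; auto. exact C4nz. }
  set (L1 := Lame t (fun u => / g u z0) y0) in *.
  set (L2 := Lame t (fun u => / g y0 u) z0) in *.
  assert (E : (L1 - L2) * (g y0 z0 * g y0 z0 * g y0 z0 * g y0 z0 * g y0 z0 * RtoC 4) = 0).
  { replace ((L1 - L2) * (g y0 z0 * g y0 z0 * g y0 z0 * g y0 z0 * g y0 z0 * RtoC 4))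
      with (L1 * (g y0 z0 * g y0 z0 * g y0 z0 * g y0 z0 * g y0 z0) * RtoC 4
           - L2 * (g y0 z0 * g y0 z0 * g y0 z0 * g y0 z0 * g y0 z0) * RtoC 4) by ring.
    rewrite E1, E2. unfold ft. rewrite ?C2, ?C3, ?C4. ring. }
  apply (f_equal (fun a => a * / (g y0 z0 * g y0 z0 * g y0 z0 * g y0 z0 * g y0 z0 * RtoC 4))) in E.
  rewrite <- Cmult_assoc, Cinv_r, Cmult_0_l, Cmult_1_r in E; auto.
Qed.
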